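(* Let $g$ be a locally Lipschitz function on $\mathbb{R}$ and suppose there is a separately convex function $h$ on $\mathbb{R}^2$ such that $g(t)=h(t,t)$ for every $t\in\mathbb{R}$. Then $$h(x+u,x-u)+h(x-u,x+u)-2h(x,x)\ge -u\cdot\liminf_{v\to0+}\int_v^u\frac{\omega_g(x,t)}{t^2}\,dt$$ for every $x,u\in\mathbb{R}$ with $u>0$. In particular, for every bounded interval $I\subset\mathbb{R}$ there is a constant $C(g,I)$ such that $$-\liminf_{b\to0+}\int_b^1\frac{\omega_g(x,t)}{t^2}\,dt<C(g,I)$$ for every $x\in I$.
   Context: A function $h:\mathbb{R}^2\to\mathbb{R}$ is called separately convex if it is convex on every line parallel to a coordinate axis. For a real function $g$ on $\mathbb{R}$, $\omega_g(x,t):=g(x+t)+g(x-t)-2g(x)$ is its second order central difference at $x$. *)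

(* Defs.v *)
From HB Require Import structures.
From mathcomp Require Import all_boot all_order all_algebra.
From mathcomp Require Import all_classical all_reals all_analysis.
Set Implicit Arguments. Unset Strict Implicit. Unset Printing Implicit Defensive.
Import Order.TTheory GRing.Theory Num.Theory.
Import numFieldNormedType.Exports.
Local Open Scope classical_set_scope.
Local Open Scope ring_scope.

Definition convex_fun (R : realType) (f : R -> R) : Prop :=
  forall (a b l : R), 0 <= l -> l <= 1 ->
    f (l * a + (1 - l) * b) <= l * f a + (1 - l) * f b.

(* h : R^2 -> R (curried) is convex on every line parallel to a coordinate axis *)
Definition separately_convex (R : realType) (h : R -> R -> R) : Prop :=
  (forall y : R, convex_fun (fun s => h s y)) /\
  (forall s : R, convex_fun (fun y => h s y)).

Definition locally_lipschitz (R : realType) (g : R -> R) : Prop :=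
  forall x : R, exists2 d : R, 0 < d &
    exists L : R, forall y z : R, `|y - x| < d -> `|z - x| < d ->
      `|g y - g z| <= L * `|y - z|.

Definition omega (R : realType) (g : R -> R) (x t : R) : R :=
  g (x + t) + g (x - t) - 2 * g x.

(* v |-> \int_v^u omega_g(x,t)/t^2 dt  (extended-real valued Lebesgue integral
   over [v,u]; only 0 < v < u matters for the liminf at 0+) *)
Definition int_omega (R : realType) (g : R -> R) (x u v : R) : \bar R :=
  (\int[@lebesgue_measure R]_(t in `[v, u]) (omega g x t / t ^+ 2)%:E)%E.

Definition liminf_0plus (R : realType) (F : R -> \bar R) : \bar R :=
  limf_einf F (0 : R)^'+.

(* Main.v *)
Require Import Defs.
From HB Require Import structures.
From mathcomp Require Import all_boot all_order all_algebra.
From mathcomp Require Import all_classical all_reals all_analysis.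
From mathcomp Require Import ring lra.
Set Implicit Arguments. Unset Strict Implicit. Unset Printing Implicit Defensive.
Import Order.TTheory GRing.Theory Num.Theory.
Import numFieldNormedType.Exports.
Local Open Scope classical_set_scope.
Local Open Scope ring_scope.
Section Alg.
Context (R : realType).
Lemma conv_mid (f : R -> R) (x r : R) : convex_fun f ->
  2 * f x <= f (x + r) + f (x - r).
Proof.
move=> cf; have := cf (x + r) (x - r) (1/2) _ _.
rewrite (_ : 1 / 2 * (x + r) + (1 - 1 / 2) * (x - r) = x); last by field.
move=> H; have {}H := H _ _.
have : f x <= 1 / 2 * f (x + r) + (1 - 1 / 2) * f (x - r) by apply: H; lra.
lra.
Qed.

Lemma conv3 (f : R -> R) (a b c : R) : convex_fun f -> a <= b -> b <= c -> a < c ->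
  f b <= (c - b) / (c - a) * f a + (b - a) / (c - a) * f c.
Proof.
move=> cf ab bc ac.
have ca0 : c - a != 0 by rewrite subr_eq0 gt_eqF.
have ca : 0 < c - a by rewrite subr_gt0.
have := cf a c ((c - b) / (c - a)) _ _.
rewrite (_ : (c - b) / (c - a) * a + (1 - (c - b) / (c - a)) * c = b); last by field.
rewrite (_ : 1 - (c - b) / (c - a) = (b - a) / (c - a)); last by field.
apply.
  by apply: divr_ge0; lra.
by rewrite ler_pdivrMr // mul1r; lra.
Qed.

Section Conv.
Variables (g : R -> R) (h : R -> R -> R) (x : R).
Hypothesis hc : separately_convex h.
Hypothesis hg : forall t, g t = h t t.

Definition Dh (r : R) := h (x + r) (x - r) + h (x - r) (x + r) - 2 * h x x.

Lemma DA (r : R) : 0 <= Dh r + omega g x r.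
Proof.
case: hc => c1 c2; rewrite /Dh /omega !hg.
have /= H1 := conv_mid x r (c1 (x - r)).
have /= H2 := conv_mid x r (c1 (x + r)).
have /= H3 := conv_mid x r (c2 x).
lra.
Qed.

Lemma DB (s r : R) : 0 < s -> s < r ->
  Dh s / s <= Dh r / r + (r - s) / (r + s) * (omega g x s / s + omega g x r / r).
Proof.
move=> s0 sr; case: hc => c1 c2; rewrite /Dh /omega !hg.
have /= H1 := conv3 (c1 (x - s)) (_ : x - s <= x + s) (_ : x + s <= x + r) (_ : x - s < x + r).
have /= H2 := conv3 (c2 (x + r)) (_ : x - r <= x - s) (_ : x - s <= x + r) (_ : x - r < x + r).
have /= H3 := conv3 (c1 (x + s)) (_ : x - r <= x - s) (_ : x - s <= x + s) (_ : x - r < x + s).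
have /= H4 := conv3 (c2 (x - r)) (_ : x - r <= x + s) (_ : x + s <= x + r) (_ : x - r < x + r).
have {H1}H1 := H1 ltac:(lra) ltac:(lra) ltac:(lra).
have {H2}H2 := H2 ltac:(lra) ltac:(lra) ltac:(lra).
have {H3}H3 := H3 ltac:(lra) ltac:(lra) ltac:(lra).
have {H4}H4 := H4 ltac:(lra) ltac:(lra) ltac:(lra).
set P1 := h (x + s) (x - s) in H1 *.
set Q1 := h (x - s) (x + s) in H3 *.
set P2 := h (x + r) (x - r) in H2 *.
set Q2 := h (x - r) (x + r) in H4 *.
set M1 := h (x + r) (x - s) in H1 H2.
set M2 := h (x - r) (x + s) in H3 H4.
set gs1 := h (x + s) (x + s) in H3 *.
set gs2 := h (x - s) (x - s) in H1 *.
set gr1 := h (x + r) (x + r) in H2 *.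
set gr2 := h (x - r) (x - r) in H4 *.
set h0 := h x x.
have e1 : x + r - (x + s) = r - s by ring.
have e2 : x + r - (x - s) = r + s by ring.
have e3 : x + s - (x - s) = 2 * s by ring.
have e4 : x - s - (x - r) = r - s by ring.
have e5 : x + r - (x - r) = 2 * r by ring.
have e6 : x + r - (x - s) = r + s by ring.
have e7 : x + s - (x - r) = r + s by ring.
have e8 : x + s - (x - s) = 2 * s by ring.
have e9 : x - s - (x - s) = 0 by ring.
rewrite ?e1 ?e2 ?e3 ?e4 ?e5 ?e6 ?e7 ?e8 in H1 H2 H3 H4.
have rs0 : r + s != 0 by apply/lt0r_neq0; lra.
have r0 : r != 0 by apply/lt0r_neq0; lra.
have s0' : s != 0 by apply/lt0r_neq0; lra.
rewrite -subr_ge0.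
set E1 := (r - s) / (r + s) * gs2 + 2 * s / (r + s) * M1 - P1.
set E2 := (r + s) / (2 * r) * P2 + (r - s) / (2 * r) * gr1 - M1.
set E3 := 2 * s / (r + s) * M2 + (r - s) / (r + s) * gs1 - Q1.
set E4 := (r - s) / (2 * r) * gr2 + (r + s) / (2 * r) * Q2 - M2.
have -> : (P2 + Q2 - 2 * h0) / r +
  (r - s) / (r + s) * ((gs1 + gs2 - 2 * h0) / s + (gr1 + gr2 - 2 * h0) / r) -
  (P1 + Q1 - 2 * h0) / s = (E1 + E3 + 2 * s / (r + s) * (E2 + E4)) / s.
  rewrite /E1 /E2 /E3 /E4; field.
  by apply/and3P; split => //; apply/lt0r_neq0; lra.
have E1p : 0 <= E1 by rewrite subr_ge0.
have E2p : 0 <= E2 by rewrite subr_ge0.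
have E3p : 0 <= E3 by rewrite subr_ge0.
have E4p : 0 <= E4 by rewrite subr_ge0.
have kp : 0 <= 2 * s / (r + s) by apply: divr_ge0; lra.
apply: divr_ge0; last lra.
have := mulr_ge0 kp (addr_ge0 E2p E4p); lra.
Qed.

End Conv.

Lemma loc_incr (F : R -> R) (t u : R) : t <= u ->
  (forall p, t <= p <= u -> exists2 d : R, 0 < d &
     forall s, t <= s <= u -> `|s - p| < d ->
       (s <= p -> F s <= F p) /\ (p <= s -> F p <= F s)) ->
  F t <= F u.
Proof.
move=> tu loc.
pose A := [set s | t <= s <= u /\ forall s', t <= s' <= s -> F t <= F s'].
have At : A t.
  split; first by rewrite lexx tu.
  by move=> s' /andP[h1 h2]; have -> : s' = t by apply/eqP; rewrite eq_le h1 h2.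
have ubA : ubound A u by move=> s [/andP[]].
have hA : has_sup A by split; [exists t | exists u].
set sg := sup A.
have sgu : sg <= u by apply: ge_sup => //; exists t.
have tsg : t <= sg by apply: sup_upper_bound.
have G : forall s', t <= s' -> s' < sg -> F t <= F s'.
  move=> s' ts' s'sg; have [y [_ Ay] s'y] := sup_gt (ex_intro _ t At) s'sg.
  by apply: Ay; rewrite ts' ltW.
have [d d0 Hd] := loc sg ltac:(by rewrite tsg sgu).
have Fsg : F t <= F sg.
  have [->|tsg'] := eqVneq t sg; first by [].
  have tsg2 : t < sg by rewrite lt_neqAle tsg' tsg.
  have [hd|hd] := leP d (sg - t).
  - have H1 : F t <= F (sg - d / 2) by apply: G; lra.
    have [H2 _] := Hd (sg - d / 2) ltac:(apply/andP; split; lra)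
      ltac:(rewrite (_ : sg - d / 2 - sg = - (d / 2)); [|ring];
            rewrite normrN ger0_norm; lra).
    by apply: le_trans H1 (H2 _); lra.
  - have H1 : F t <= F ((sg + t) / 2) by apply: G; lra.
    have [H2 _] := Hd ((sg + t) / 2) ltac:(apply/andP; split; lra)
      ltac:(rewrite ler0_norm; lra).
    by apply: le_trans H1 (H2 _); lra.
have G' : forall s', t <= s' -> s' <= sg -> F t <= F s'.
  move=> s' ts'; rewrite le_eqVlt => /predU1P[->//|]; exact: G.
have [sgu'|sgu'] := eqVneq sg u; first by rewrite -sgu'.
have sgu2 : sg < u by rewrite lt_neqAle sgu' sgu.
suff [s [As ss]] : exists s, A s /\ sg < s.
  by have := sup_upper_bound hA As; rewrite -/sg; lra.
have mk : forall s, sg < s -> s <= u -> s - sg < d -> A s /\ sg < s.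
  move=> s sgs su sd; split => //; split; first by apply/andP; split; lra.
  move=> s' /andP[ts' s's].
  have [s'sg|s'sg] := leP s' sg; first exact: G'.
  have [_ H2] := Hd s' ltac:(apply/andP; split; lra)
      ltac:(rewrite ger0_norm; lra).
  by apply: le_trans Fsg (H2 _); lra.
have [hd|hd] := leP d (u - sg).
- exists (sg + d / 2); apply: mk; lra.
- exists ((sg + u) / 2); apply: mk; lra.
Qed.

Lemma lip_cont (g : R -> R) : locally_lipschitz g -> continuous g.
Proof.
move=> hl p; apply/cvgrPdist_lt => e e0.
have [d d0 [L HL]] := hl p.
have L0 : 0 < `|L| + 1 by rewrite ltr_pwDr // normr_ge0.
have [dd dd0 [hdd hde]] : exists2 dd : R, 0 < dd & dd <= d /\ dd <= e / (`|L| + 1).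
  have ep : 0 < e / (`|L| + 1) by rewrite divr_gt0.
  have [h|h] := leP d (e / (`|L| + 1)); [exists d | exists (e / (`|L| + 1))] => //; lra.
apply/nbhs_ballP; exists dd => // y; rewrite /ball /= => yd.
have H := HL p y; rewrite subrr normr0 in H.
have {H} H := H d0 ltac:(rewrite distrC; lra).
apply: (le_lt_trans H).
apply: (le_lt_trans (ler_wpM2r (normr_ge0 _) (ler_norm L))).
have : `|L| * `|p - y| <= (`|L| + 1) * `|p - y|.
  by apply: ler_wpM2r; [exact: normr_ge0 | lra].
move=> h1; apply: (le_lt_trans h1).
rewrite mulrC -ltr_pdivlMr //; lra.
Qed.

Lemma psi_cont (g : R -> R) (x p : R) : continuous g -> p != 0 ->
  {for p, continuous (fun t => omega g x t / t ^+ 2)}.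
Proof.
move=> gc p0.
apply: cvgM.
  apply: cvgB; last exact: cvg_cst.
  apply: cvgD.
    apply: continuous_comp; last exact: gc.
    by apply: cvgD; [exact: cvg_cst | exact: cvg_id].
  apply: continuous_comp; last exact: gc.
  by apply: cvgB; [exact: cvg_cst | exact: cvg_id].
apply: cvgV; first by rewrite expf_neq0.
by apply: cvgM; exact: cvg_id.
Qed.
Notation mu := (@lebesgue_measure R).
Lemma psi_int (g : R -> R) (x a b : R) : continuous g -> 0 < a ->
  mu.-integrable `[a, b] (EFin \o (fun t => omega g x t / t ^+ 2)).
Proof.
move=> gc a0; apply: continuous_compact_integrable; first exact: segment_compact.
apply: continuous_in_subspaceT => p; rewrite inE /= in_itv /= => /andP[ap _].
apply: psi_cont => //; apply/lt0r_neq0; exact: lt_le_trans ap.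
Qed.

Definition J (g : R -> R) (x a b : R) := \int[mu]_(t in `[a, b]) (omega g x t / t ^+ 2).

Lemma int_omega_eq (g : R -> R) (x u v : R) : continuous g -> 0 < v ->
  int_omega g x u v = (J g x v u)%:E.
Proof.
move=> gc v0; rewrite /int_omega /J /Rintegral fineK //.
exact: integrable_fin_num (psi_int x u gc v0).
Qed.

Lemma J_split (g : R -> R) (x a b c : R) : continuous g -> 0 < a -> a <= b -> b <= c ->
  J g x a c = J g x a b + J g x b c.
Proof.
move=> gc a0 ab bc.
have := @Rintegral_itvB R (fun t => omega g x t / t ^+ 2) (BLeft a) (BRight c) b
  (psi_int x c gc a0) ltac:(by rewrite bnd_simp) ltac:(by rewrite bnd_simp).
rewrite Rintegral_itv_obnd_cbnd; last first.
  apply: integrableS (psi_int x c gc a0) => //.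
  by apply: subset_itvr; rewrite bnd_simp.
rewrite /J => <-; ring.
Qed.

Lemma J_lb (g : R -> R) (x a b m : R) : continuous g -> 0 < a -> a <= b ->
  (forall r, a <= r -> r <= b -> m <= omega g x r / r ^+ 2) ->
  m * (b - a) <= J g x a b.
Proof.
move=> gc a0 ab hm.
have -> : m * (b - a) = \int[mu]_(t in `[a, b]) m.
  rewrite Rintegral_cst //.
  have := @lebesgue_measure_itv R `[a, b]%R; rewrite /= => ->.
  have [ab'|] := ltP a b; first by rewrite lte_fin ab' -EFinB.
  move=> ba; have -> : b = a by apply/eqP; rewrite eq_le ab ba.
  by rewrite ltxx subrr /= mulr0.
apply: le_Rintegral => //.
- apply: continuous_compact_integrable; first exact: segment_compact.
  by apply: continuous_subspaceT => p; exact: cvg_cst.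
- exact: psi_int.
- by move=> r; rewrite /= in_itv /= => /andP[]; exact: hm.
Qed.

Lemma psi_delta (g : R -> R) (x p e : R) : continuous g -> 0 < p -> 0 < e ->
  exists2 d : R, 0 < d & forall r, `|p - r| < d ->
    `|omega g x p / p ^+ 2 - omega g x r / r ^+ 2| < e.
Proof.
move=> gc p0 e0.
have := psi_cont (x := x) gc (lt0r_neq0 p0).
move/cvgrPdist_lt => /(_ e e0) /nbhs_ballP [d d0 Hd].
by exists d => // r hr; apply: Hd.
Qed.

Lemma J_nil (g : R -> R) (x u : R) : continuous g -> 0 < u -> J g x u u = 0.
Proof.
move=> gc u0; have := J_split x gc u0 (lexx u) (lexx u); lra.
Qed.

Section Main.
Variables (g : R -> R) (h : R -> R -> R) (x u : R).
Hypothesis gc : continuous g.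
Hypothesis hc : separately_convex h.
Hypothesis hg : forall t, g t = h t t.
Hypothesis u0 : 0 < u.

Let K s := Dh h x s / s - J g x s u.

Lemma pair1 (a b m e : R) : 0 < a -> a <= b -> b <= u -> 0 <= e ->
  (forall r, a <= r -> r <= b -> m <= omega g x r / r ^+ 2 /\ omega g x r / r ^+ 2 <= m + e) ->
  K a - K b <= e * (b - a).
Proof.
move=> a0 ab bu e0 hm.
have [<-|ab'] := eqVneq a b; first by rewrite !subrr mulr0 lexx.
have ab2 : a < b by rewrite lt_neqAle ab' ab.
have b0 : 0 < b by lra.
have HB := DB x hc hg a0 ab2.
have Js := J_split x gc a0 ab bu.
have Jl := J_lb gc a0 ab (fun r h1 h2 => (hm r h1 h2).1).
have [pa1 pa2] := hm a (lexx a) ab.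
have [pb1 pb2] := hm b ab (lexx b).
set pa := omega g x a / a ^+ 2 in pa1 pa2.
set pb := omega g x b / b ^+ 2 in pb1 pb2.
have ea : omega g x a / a = a * pa by rewrite /pa; field; apply/lt0r_neq0.
have eb : omega g x b / b = b * pb by rewrite /pb; field; apply/lt0r_neq0.
rewrite ea eb in HB.
have k0 : 0 <= (b - a) / (b + a) by apply: divr_ge0; lra.
have T1 : (b - a) / (b + a) * (a * pa + b * pb) <= (b - a) / (b + a) * ((a + b) * (m + e)).
  apply: ler_wpM2l => //.
  have := ler_wpM2l (ltW a0) pa2; have := ler_wpM2l (ltW b0) pb2; lra.
have T2 : (b - a) / (b + a) * ((a + b) * (m + e)) = m * (b - a) + e * (b - a).
  by field; apply/lt0r_neq0; lra.
rewrite /K Js; lra.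
Qed.

Lemma step1 (t : R) : 0 < t -> t <= u -> K t <= K u.
Proof.
move=> t0 tu; apply/ler_addgt0Pr => ep ep0.
have hl : 0 < u - t + 1 by lra.
set eta := ep / (u - t + 1).
have eta0 : 0 < eta by apply: divr_gt0.
have key : eta * (u - t) <= ep.
  have : eta * (u - t + 1) = ep by rewrite /eta; field; apply/lt0r_neq0.
  have : 0 <= eta by exact: ltW.
  nra.
suff : K t + eta * t <= K u + eta * u by lra.
apply: (@loc_incr (fun s => K s + eta * s) t u tu).
  move=> p /andP[tp pu].
  have p0 : 0 < p by lra.
  have e2 : 0 < eta / 2 by apply: divr_gt0.
  have [d d0 Hd] := psi_delta x gc p0 e2.
  exists d => // s /andP[ts su] sp.
  have bnd : forall r, `|p - r| < d ->
      omega g x p / p ^+ 2 - eta / 2 <= omega g x r / r ^+ 2 /\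
      omega g x r / r ^+ 2 <= omega g x p / p ^+ 2 - eta / 2 + eta.
    move=> r /Hd; rewrite ltr_norml => /andP[h1 h2]; split; lra.
  split => hsp.
  - have hr : forall r, s <= r -> r <= p ->
      omega g x p / p ^+ 2 - eta / 2 <= omega g x r / r ^+ 2 /\
      omega g x r / r ^+ 2 <= omega g x p / p ^+ 2 - eta / 2 + eta.
      move=> r h1 h2; apply: bnd; rewrite ger0_norm; [|lra].
      move: sp; rewrite ler0_norm; lra.
    have s0 : 0 < s by lra.
    have := pair1 s0 hsp pu (ltW eta0) hr; rewrite mulrBr; lra.
  - have hr : forall r, p <= r -> r <= s ->
      omega g x p / p ^+ 2 - eta / 2 <= omega g x r / r ^+ 2 /\
      omega g x r / r ^+ 2 <= omega g x p / p ^+ 2 - eta / 2 + eta.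
      move=> r h1 h2; apply: bnd; rewrite ler0_norm; [|lra].
      move: sp; rewrite ger0_norm; lra.
    have := pair1 p0 hsp su (ltW eta0) hr; rewrite mulrBr; lra.
Qed.

Let c := - (Dh h x u / u).
Let Z s := (J g x s u - c) / s.

Lemma pair2 (a b e : R) : 0 < a -> a <= b -> b <= u -> 0 <= e ->
  (forall r, a <= r -> r <= b -> omega g x b / b ^+ 2 - e <= omega g x r / r ^+ 2) ->
  - (e * (b - a) / a) <= Z a - Z b.
Proof.
move=> a0 ab bu e0 hm.
have b0 : 0 < b by lra.
have Js := J_split x gc a0 ab bu.
have Jl := J_lb gc a0 ab hm.
have K1 := step1 b0 bu.
rewrite /K J_nil // subr0 in K1.
have A := DA x hc hg b.
have A' : 0 <= Dh h x b / b + omega g x b / b.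
  by rewrite -mulrDl; apply: divr_ge0; lra.
set X := J g x b u - c + omega g x b / b.
have X0 : 0 <= X by rewrite /X /c; lra.
have -> : Z a - Z b = (J g x a b - (omega g x b / b ^+ 2 - e) * (b - a)) / a
   + (b - a) * X / (a * b) - e * (b - a) / a.
  rewrite /Z /X Js; field; apply/andP; split; apply/lt0r_neq0; lra.
have T1 : 0 <= (J g x a b - (omega g x b / b ^+ 2 - e) * (b - a)) / a.
  by apply: divr_ge0; lra.
have T2 : 0 <= (b - a) * X / (a * b).
  by apply: divr_ge0; [apply: mulr_ge0; lra | apply: mulr_ge0; lra].
lra.
Qed.

Lemma step2 (t : R) : 0 < t -> t <= u -> c * (1 - t / u) <= J g x t u.
Proof.
move=> t0 tu.
suff H : Z u <= Z t.
  rewrite /Z J_nil // in H.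
  rewrite ler_pdivlMr // in H.
  have -> : c * (1 - t / u) = c + (0 - c) / u * t by field; apply/lt0r_neq0.
  lra.
apply/ler_addgt0Pr => ep ep0.
have hl : 0 < u - t + 1 by lra.
set eta := ep / (u - t + 1).
have eta0 : 0 < eta by apply: divr_gt0.
have key : eta * (u - t) <= ep.
  have : eta * (u - t + 1) = ep by rewrite /eta; field; apply/lt0r_neq0.
  have : 0 <= eta by exact: ltW.
  nra.
set e := eta * t.
have e0 : 0 < e by apply: mulr_gt0.
have hle : forall a b, t <= a -> a <= b -> e * (b - a) / a <= eta * (b - a).
  move=> a b ta ab; have a0 : 0 < a by lra.
  rewrite ler_pdivrMr // /e.
  have : 0 <= eta * (b - a) by apply: mulr_ge0; lra.
  nra.
suff : - Z t + eta * t <= - Z u + eta * u by lra.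
apply: (@loc_incr (fun s => - Z s + eta * s) t u tu).
move=> p /andP[tp pu].
have p0 : 0 < p by lra.
have e2 : 0 < e / 2 by apply: divr_gt0.
have [d d0 Hd] := psi_delta x gc p0 e2.
exists d => // s /andP[ts su] sp.
have bnd : forall r, `|p - r| < d ->
    omega g x p / p ^+ 2 - e / 2 <= omega g x r / r ^+ 2 /\
    omega g x r / r ^+ 2 <= omega g x p / p ^+ 2 + e / 2.
  move=> r /Hd; rewrite ltr_norml => /andP[h1 h2]; split; lra.
split => hsp.
- have hr : forall r, s <= r -> r <= p ->
    omega g x p / p ^+ 2 - e <= omega g x r / r ^+ 2.
    move=> r h1 h2; have [] := bnd r; last lra.
    rewrite ger0_norm; [|lra].
    move: sp; rewrite ler0_norm; lra.
  have s0 : 0 < s by lra.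
  have := pair2 s0 hsp pu (ltW e0) hr.
  have := hle s p ts hsp; rewrite mulrBr; lra.
- have hr : forall r, p <= r -> r <= s ->
    omega g x s / s ^+ 2 - e <= omega g x r / r ^+ 2.
    move=> r h1 h2.
    have [] := bnd r.
      rewrite ler0_norm; [|lra].
      move: sp; rewrite ger0_norm; lra.
    have [] := bnd s; last lra.
    by rewrite ler0_norm; [|lra]; move: sp; rewrite ger0_norm; lra.
  have := pair2 p0 hsp su (ltW e0) hr.
  have := hle p s tp hsp; rewrite mulrBr; lra.
Qed.

End Main.
End Alg.

Section Final.
Context (R : realType).

Lemma conv_max (f : R -> R) (al be p : R) : convex_fun f -> al <= p -> p <= be ->
  f p <= Order.max (f al) (f be).
Proof.
move=> cf ap pb.
have m1 : f al <= Order.max (f al) (f be) by rewrite le_max lexx.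
have m2 : f be <= Order.max (f al) (f be) by rewrite le_max lexx orbT.
have [ab|ab] := eqVneq al be.
  have -> : p = al by apply/eqP; rewrite eq_le ap andbT ab.
  exact: m1.
have ab2 : al < be by rewrite lt_neqAle ab (le_trans ap pb).
have H := conv3 cf ap pb ab2.
set M := Order.max (f al) (f be) in m1 m2 *.
have l0 : 0 <= (be - p) / (be - al) by apply: divr_ge0; lra.
have l1 : 0 <= (p - al) / (be - al) by apply: divr_ge0; lra.
have s1 : (be - p) / (be - al) + (p - al) / (be - al) = 1.
  by field; apply/lt0r_neq0; lra.
have := ler_wpM2l l0 m1; have := ler_wpM2l l1 m2.
have : (be - p) / (be - al) * M + (p - al) / (be - al) * M = M.
  by rewrite -mulrDl s1 mul1r.
lra.
Qed.

Lemma conv_lb (f : R -> R) (a b p : R) : convex_fun f -> a <= p -> p <= b ->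
  2 * f ((a + b) / 2) - Order.max (f a) (f b) <= f p.
Proof.
move=> cf ap pb.
have := conv_mid ((a + b) / 2) (p - (a + b) / 2) cf.
rewrite (_ : (a + b) / 2 + (p - (a + b) / 2) = p); last by ring.
have := conv_max cf (_ : a <= (a + b) / 2 - (p - (a + b) / 2)) (_ : _ <= b).
move=> H1 H2; have := H1 ltac:(lra) ltac:(lra); lra.
Qed.


Lemma part1 (g : R -> R) (h : R -> R -> R) (x u : R) :
  continuous g -> separately_convex h -> (forall t, g t = h t t) -> 0 < u ->
  (- ((u%:E * liminf_0plus (int_omega g x u))) <= (Dh h x u)%:E)%E.
Proof.
move=> gc hc hg u0.
set L := liminf_0plus (int_omega g x u).
set c := - (Dh h x u / u).
suff cL : (c%:E <= L)%E.
  rewrite leeNl.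
  have -> : (- (Dh h x u)%:E = u%:E * c%:E)%E.
    by rewrite -EFinM -EFinN /c; congr (_%:E); field; apply/lt0r_neq0.
  by rewrite lee_pmul2l // lte_fin.
apply/lee_addgt0Pr => e e0.
have ce : 0 < `|c| + e by rewrite ltr_pwDr // normr_ge0.
set ep := u * e / (`|c| + e).
have ep0 : 0 < ep by rewrite /ep; apply: divr_gt0 => //; apply: mulr_gt0.
have epu : ep <= u.
  rewrite /ep ler_pdivrMr // ler_pM2l //; have := normr_ge0 c; lra.
have cep : `|c| * (ep / u) <= e.
  have -> : ep / u = e / (`|c| + e) by rewrite /ep; field; apply/andP; split;
    apply/lt0r_neq0 => //.
  rewrite mulrA ler_pdivrMr //; have := normr_ge0 c; nra.
suff : ((c - e)%:E <= L)%E.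
  case: L => [l||] //=; rewrite ?lee_fin => H; [|by rewrite leey].
  lra.
rewrite /L /liminf_0plus limf_einfE.
apply: le_ereal_sup_tmp.
have HV : \forall v \near (0:R)^'+, 0 < v < ep.
  near=> v; apply/andP; split; near: v; [exact: nbhs_right_gt | exact: nbhs_right_lt].
exists (ereal_inf (int_omega g x u @` [set v | 0 < v < ep])).
  by exists [set v | 0 < v < ep].
apply/ereal_infP => _ [v /andP[v0 vep] <-].
rewrite int_omega_eq // lee_fin.
have := step2 x gc hc hg u0 v0 (ltW (lt_le_trans vep epu)).
rewrite -/c => H.
have : c * (v / u) <= `|c| * (ep / u).
  apply: (le_trans (ler_wpM2r _ (ler_norm c))).
    by apply: divr_ge0; lra.
  apply: ler_wpM2l; first exact: normr_ge0.
  by apply: ler_wpM2r; [rewrite invr_ge0; lra | lra].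
have : c * (1 - v / u) = c - c * (v / u) by ring.
lra.
Unshelve. all: by end_near.
Qed.


Lemma max_abs (p q : R) : Order.max p q <= `|p| + `|q|.
Proof.
rewrite ge_max; have := ler_norm p; have := ler_norm q.
have := normr_ge0 p; have := normr_ge0 q.
move=> *; apply/andP; split; lra.
Qed.

Lemma sc_ub (h : R -> R -> R) (a1 b1 a2 b2 p q : R) : separately_convex h ->
  a1 <= p -> p <= b1 -> a2 <= q -> q <= b2 ->
  h p q <= `|h a1 a2| + `|h a1 b2| + `|h b1 a2| + `|h b1 b2|.
Proof.
case=> c1 c2 h1 h2 h3 h4.
have /= H := conv_max (c1 q) h1 h2.
have /= Ha := conv_max (c2 a1) h3 h4.
have /= Hb := conv_max (c2 b1) h3 h4.
have := max_abs (h a1 a2) (h a1 b2).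
have := max_abs (h b1 a2) (h b1 b2).
have := normr_ge0 (h a1 a2); have := normr_ge0 (h a1 b2).
have := normr_ge0 (h b1 a2); have := normr_ge0 (h b1 b2).
move: H; rewrite le_max => /orP[] H; lra.
Qed.

Lemma sc_lb (h : R -> R -> R) (a b p : R) : separately_convex h ->
  a <= p -> p <= b ->
  2 * (2 * h ((a + b) / 2) ((a + b) / 2) -
       (`|h ((a + b) / 2) a| + `|h ((a + b) / 2) b|))
  - (`|h a a| + `|h a b| + `|h b a| + `|h b b|) <= h p p.
Proof.
move=> hc ap pb; have hc' := hc; case: hc' => c1 c2.
have /= H1 := conv_lb (c1 p) ap pb.
have /= H2 := conv_lb (c2 ((a + b) / 2)) ap pb.
have := max_abs (h ((a + b) / 2) a) (h ((a + b) / 2) b).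
have /= Ha := conv_max (c2 a) ap pb.
have /= Hb := conv_max (c2 b) ap pb.
have M1 := max_abs (h a a) (h a b); have M2 := max_abs (h b a) (h b b).
have Hm : Num.max (h a p) (h b p) <= `|h a a| + `|h a b| + `|h b a| + `|h b b|.
  rewrite ge_max; have := normr_ge0 (h a a); have := normr_ge0 (h a b).
  have := normr_ge0 (h b a); have := normr_ge0 (h b b).
  move=> *; apply/andP; split; lra.
lra.
Qed.

End Final.

Theorem proposition4p1 (R : realType) (g : R -> R) (h : R -> R -> R) :
  locally_lipschitz g ->
  separately_convex h ->
  (forall t : R, g t = h t t) ->
  (forall x u : R, 0 < u ->
     ((h (x + u) (x - u) + h (x - u) (x + u) - 2 * h x x)%:E >=
      - (u%:E * liminf_0plus (int_omega g x u)))%E) /\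
  (forall a b : R, exists C : R, forall x : R, a <= x <= b ->
     (- liminf_0plus (int_omega g x 1) < C%:E)%E).
Proof.
move=> gl hc hg; have gc := lip_cont gl.
split; first by move=> x u u0; exact: (part1 x gc hc hg u0).
move=> a b.
have [ab|ba] := leP a b; last first.
  by exists 0 => x /andP[ax xb]; exfalso; lra.
set S1 := `|h (a + 1) (a - 1)| + `|h (a + 1) (b - 1)| + `|h (b + 1) (a - 1)| + `|h (b + 1) (b - 1)|.
set S2 := `|h (a - 1) (a + 1)| + `|h (a - 1) (b + 1)| + `|h (b - 1) (a + 1)| + `|h (b - 1) (b + 1)|.
set Lo := 2 * (2 * h ((a + b) / 2) ((a + b) / 2) -
       (`|h ((a + b) / 2) a| + `|h ((a + b) / 2) b|))
  - (`|h a a| + `|h a b| + `|h b a| + `|h b b|).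
exists (S1 + S2 - 2 * Lo + 1) => x /andP[ax xb].
have := part1 x gc hc hg ltr01; rewrite mul1e => H.
apply: (le_lt_trans H); rewrite lte_fin /Dh.
have := sc_ub hc (_ : a + 1 <= x + 1) (_ : x + 1 <= b + 1) (_ : a - 1 <= x - 1) (_ : x - 1 <= b - 1).
have := sc_ub hc (_ : a - 1 <= x - 1) (_ : x - 1 <= b - 1) (_ : a + 1 <= x + 1) (_ : x + 1 <= b + 1).
have := sc_lb hc ax xb.
rewrite -/S1 -/S2 -/Lo => H1 H2 H3.
have {H2}H2 := H2 ltac:(lra) ltac:(lra) ltac:(lra) ltac:(lra).
have {H3}H3 := H3 ltac:(lra) ltac:(lra) ltac:(lra) ltac:(lra).
lra.
Qed.
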